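(* Let $f$ be as in the standing setting and quasi-strongly convex on $X$ with constant $\kappa_f>0$; let $\mu_f=\kappa_f/L_f$. Consider the fast gradient method: $x^0=y^0\in X$ and for $k\ge0$ $$x^{k+1}=\big[y^k-\tfrac1{L_f}\nabla f(y^k)\big]_X,\qquad y^{k+1}=x^{k+1}+\beta\,(x^{k+1}-x^k),\qquad \beta=\frac{\sqrt{L_f}-\sqrt{\kappa_f}}{\sqrt{L_f}+\sqrt{\kappa_f}}.$$ Assume that all iterates $y^k$ lie in $X$ and have the same projection onto $X^*$, i.e. $[y^k]_{X^*}=[y^0]_{X^*}$ for all $k\ge0$. Then $$f(x^k)-f^*\le\big(1-\sqrt{\mu_f}\big)^k\cdot 2\big(f(x^0)-f^*\big)\qquad\forall k\ge0.$$
   Context: Standing setting: $X\subseteq\mathbb{R}^n$ is a nonempty closed convex set; $f:X\to\mathbb{R}$ is convex and continuously differentiable, with $L_f$-Lipschitz continuous gradient on $X$ ($L_f>0$). Consider $f^*=\min_{x\in X}f(x)$ with optimal set $X^*$ nonempty and closed and $f^*$ finite. $\|\cdot\|$ is the Euclidean norm, $[u]_S$ is the Euclidean projection onto a closed convex set $S$, and $\bar x=[x]_{X^*}$. Quasi-strong convexity with constant $\kappa_f$: $f^*\ge f(x)+\langle\nabla f(x),\bar x-x\rangle+\frac{\kappa_f}{2}\|x-\bar x\|^2$ for all $x\in X$ (this forces $\kappa_f\le L_f$). *)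

(* Defs.v *)
From mathcomp Require Import all_boot.
From Stdlib Require Import Reals.
Set Implicit Arguments. Unset Strict Implicit. Unset Printing Implicit Defensive.
Local Open Scope R_scope.

Definition vec (n : nat) := 'I_n -> R.

Definition vadd n (u v : vec n) : vec n := fun i => u i + v i.
Definition vsub n (u v : vec n) : vec n := fun i => u i - v i.
Definition vscale n (a : R) (u : vec n) : vec n := fun i => a * u i.

Definition dot n (u v : vec n) : R := \big[Rplus/0]_(i < n) (u i * v i).
Definition vnorm n (u : vec n) : R := sqrt (dot u u).

Definition convex_setn n (S : vec n -> Prop) : Prop :=
  forall x y t, S x -> S y -> 0 <= t <= 1 ->
    S (vadd (vscale t x) (vscale (1 - t) y)).

Definition closed_setn n (S : vec n -> Prop) : Prop :=
  forall x, (forall eps, 0 < eps -> exists y, S y /\ vnorm (vsub x y) < eps) -> S x.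

Definition convex_fun_on n (S : vec n -> Prop) (f : vec n -> R) : Prop :=
  forall x y t, S x -> S y -> 0 <= t <= 1 ->
    f (vadd (vscale t x) (vscale (1 - t) y)) <= t * f x + (1 - t) * f y.

Definition has_gradient_on n (S : vec n -> Prop) (f : vec n -> R) (g : vec n -> vec n) : Prop :=
  forall x, S x -> forall eps, 0 < eps -> exists delta, 0 < delta /\
    forall y, S y -> vnorm (vsub y x) < delta ->
      Rabs (f y - f x - dot (g x) (vsub y x)) <= eps * vnorm (vsub y x).

Definition continuous_onn n (S : vec n -> Prop) (g : vec n -> vec n) : Prop :=
  forall x, S x -> forall eps, 0 < eps -> exists delta, 0 < delta /\
    forall y, S y -> vnorm (vsub y x) < delta -> vnorm (vsub (g y) (g x)) < eps.

Definition lipschitz_on n (S : vec n -> Prop) (g : vec n -> vec n) (L : R) : Prop :=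
  forall x y, S x -> S y -> vnorm (vsub (g x) (g y)) <= L * vnorm (vsub x y).

Definition is_proj n (S : vec n -> Prop) (u p : vec n) : Prop :=
  S p /\ forall z, S z -> vnorm (vsub u p) <= vnorm (vsub u z).

Definition optset n (X : vec n -> Prop) (f : vec n -> R) (fstar : R) : vec n -> Prop :=
  fun x => X x /\ f x = fstar.

Definition quasi_strongly_convex n (X : vec n -> Prop) (f : vec n -> R)
    (g : vec n -> vec n) (fstar kappa : R) : Prop :=
  forall x xbar, X x -> is_proj (optset X f fstar) x xbar ->
    f x + dot (g x) (vsub xbar x) + kappa / 2 * (vnorm (vsub x xbar)) ^ 2 <= fstar.

(* Main.v *)
Require Import Defs.
From mathcomp Require Import all_boot.
From Stdlib Require Import Reals Lra Psatz FunctionalExtensionality Classical.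
Local Open Scope R_scope.
Set Implicit Arguments. Unset Strict Implicit.
From HB Require Import structures.
Lemma RplusA : associative Rplus. Proof. move=> a b c; ring. Qed.
HB.instance Definition _ := Monoid.isComLaw.Build R 0 Rplus RplusA Rplus_comm Rplus_0_l.

Lemma big_addR n (F G : 'I_n -> R) :
  \big[Rplus/0]_(i < n) (F i + G i) = \big[Rplus/0]_(i < n) F i + \big[Rplus/0]_(i < n) G i.
Proof.
elim: n F G => [|n IH] F G.
  rewrite !big_ord0; lra.
rewrite !big_ord_recr IH /=; simpl; lra.
Qed.

Lemma big_scaleR n c (F : 'I_n -> R) :
  \big[Rplus/0]_(i < n) (c * F i) = c * \big[Rplus/0]_(i < n) F i.
Proof.
elim: n F => [|n IH] F.
  rewrite !big_ord0; ring.
rewrite !big_ord_recr IH /=; simpl; ring.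
Qed.

Lemma big_ge0R n (F : 'I_n -> R) :
  (forall i, 0 <= F i) -> 0 <= \big[Rplus/0]_(i < n) F i.
Proof.
elim: n F => [|n IH] F H.
  rewrite !big_ord0; lra.
rewrite !big_ord_recr /=. apply: Rplus_le_le_0_compat; [apply: IH => i; exact: H | exact: H].
Qed.

Section V.
Variable n : nat.
Implicit Types u v w : vec n.

Lemma dot_addl u v w : dot (vadd u v) w = dot u w + dot v w.
Proof. rewrite /dot -big_addR; apply: eq_bigr => i _; rewrite /vadd; ring. Qed.
Lemma dot_addr u v w : dot w (vadd u v) = dot w u + dot w v.
Proof. rewrite /dot -big_addR; apply: eq_bigr => i _; rewrite /vadd; ring. Qed.
Lemma dot_scalel c u w : dot (vscale c u) w = c * dot u w.
Proof. rewrite /dot -big_scaleR; apply: eq_bigr => i _; rewrite /vscale; ring. Qed.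
Lemma dot_scaler c u w : dot w (vscale c u) = c * dot w u.
Proof. rewrite /dot -big_scaleR; apply: eq_bigr => i _; rewrite /vscale; ring. Qed.
Lemma dot_subl u v w : dot (vsub u v) w = dot u w - dot v w.
Proof.
have -> : vsub u v = vadd u (vscale (-1) v) by apply: functional_extensionality => i; rewrite /vsub /vadd /vscale; ring.
rewrite dot_addl dot_scalel; ring.
Qed.
Lemma dot_subr u v w : dot w (vsub u v) = dot w u - dot w v.
Proof.
have -> : vsub u v = vadd u (vscale (-1) v) by apply: functional_extensionality => i; rewrite /vsub /vadd /vscale; ring.
rewrite dot_addr dot_scaler; ring.
Qed.
Lemma dot_comm u v : dot u v = dot v u.
Proof. rewrite /dot; apply: eq_bigr => i _; ring. Qed.
Lemma dot_ge0 u : 0 <= dot u u.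
Proof. apply: big_ge0R => i; nra. Qed.
Lemma vnorm_sq u : vnorm u * vnorm u = dot u u.
Proof. rewrite /vnorm sqrt_sqrt //; exact: dot_ge0. Qed.
Lemma vnorm_ge0 u : 0 <= vnorm u.
Proof. exact: sqrt_pos. Qed.

Lemma dot_le_sq u v : forall t, 0 < t -> 2 * dot u v <= t * dot u u + / t * dot v v.
Proof.
move=> t Ht.
have H := dot_ge0 (vsub (vscale t u) v).
rewrite !dot_subl !dot_subr !dot_scalel !dot_scaler (dot_comm v u) in H.
have Hi : t * / t = 1 by field; lra.
have Hti : 0 < / t by apply: Rinv_0_lt_compat.
have : 0 <= / t * (t * (t * dot u u) - t * dot u v - (t * dot u v - dot v v)) by nra.
have -> : / t * (t * (t * dot u u) - t * dot u v - (t * dot u v - dot v v)) =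
   t * dot u u - 2 * dot u v + / t * dot v v by field; lra.
lra.
Qed.

Lemma frac_lt1 (a : R) : 0 <= a -> a / (a + 1) < 1.
Proof.
move=> Ha.
have -> : a / (a + 1) = 1 - / (a + 1) by field; lra.
have : 0 < / (a + 1) by apply: Rinv_0_lt_compat; lra.
lra.
Qed.

Lemma cauchy_schwarz u v : dot u v <= vnorm u * vnorm v.
Proof.
have Hu := vnorm_sq u; have Hv := vnorm_sq v.
have Hu0 := vnorm_ge0 u; have Hv0 := vnorm_ge0 v.
have Gu := dot_ge0 u; have Gv := dot_ge0 v.
case: (Req_dec (vnorm u) 0) => Ha.
  rewrite Ha Rmult_0_l.
  apply: Rnot_lt_le => Hc.
  have Huu : dot u u = 0 by nra.
  have Hp : 0 < (dot v v + 1) / (dot u v) by apply: Rdiv_lt_0_compat; lra.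
  have := dot_le_sq u v Hp. rewrite Huu Rmult_0_r Rplus_0_l.
  have -> : / ((dot v v + 1) / (dot u v)) * dot v v = (dot u v) * (dot v v / (dot v v + 1)) by field; lra.
  have := frac_lt1 Gv. move=> Hl H.
  have : (dot u v) * (dot v v / (dot v v + 1)) < (dot u v) * 1 by apply: Rmult_lt_compat_l.
  lra.
case: (Req_dec (vnorm v) 0) => Hb.
  rewrite Hb Rmult_0_r.
  apply: Rnot_lt_le => Hc.
  have Hvv : dot v v = 0 by nra.
  have Hp : 0 < (dot u v) / (dot u u + 1) by apply: Rdiv_lt_0_compat; lra.
  have := dot_le_sq u v Hp. rewrite Hvv Rmult_0_r Rplus_0_r.
  have -> : (dot u v) / (dot u u + 1) * dot u u = (dot u v) * (dot u u / (dot u u + 1)) by field; lra.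
  have := frac_lt1 Gu. move=> Hl H.
  have : (dot u v) * (dot u u / (dot u u + 1)) < (dot u v) * 1 by apply: Rmult_lt_compat_l.
  lra.
have Hp : 0 < vnorm v / vnorm u by apply: Rdiv_lt_0_compat; lra.
have := dot_le_sq u v Hp.
rewrite -Hu -Hv.
have -> : vnorm v / vnorm u * (vnorm u * vnorm u) + / (vnorm v / vnorm u) * (vnorm v * vnorm v) = 2 * (vnorm u * vnorm v) by field; lra.
lra.
Qed.

Lemma cauchy_schwarz_abs u v : Rabs (dot u v) <= vnorm u * vnorm v.
Proof.
apply: Rabs_le; split; last exact: cauchy_schwarz.
have := cauchy_schwarz u (vscale (-1) v).
rewrite dot_scaler.
have -> : vnorm (vscale (-1) v) = vnorm v.
  rewrite /vnorm dot_scalel dot_scaler. f_equal; ring.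
lra.
Qed.

End V.


Lemma Rabs_le_inv (a b : R) : Rabs a <= b -> -b <= a <= b.
Proof. move=> H; have := Rle_abs a; have := Rle_abs (-a); rewrite Rabs_Ropp; lra. Qed.

Lemma vnorm_scale n c (u : vec n) : vnorm (vscale c u) = Rabs c * vnorm u.
Proof.
rewrite /vnorm dot_scalel dot_scaler -Rmult_assoc sqrt_mult_alt; last by apply: Rle_0_sqr.
by rewrite sqrt_Rsqr_abs.
Qed.

Lemma sq_le_of_norm_le n (u v : vec n) : vnorm u <= vnorm v -> dot u u <= dot v v.
Proof.
move=> H; rewrite -!vnorm_sq; have := vnorm_ge0 u; nra.
Qed.

Lemma norm_le_of_sq_le n (u v : vec n) : dot u u <= dot v v -> vnorm u <= vnorm v.
Proof. move=> H; rewrite /vnorm; apply: sqrt_le_1_alt; exact: H. Qed.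

Lemma sq_sub_scale n (w e : vec n) t :
  dot (vsub w (vscale t e)) (vsub w (vscale t e)) = dot w w - 2 * t * dot w e + t * t * dot e e.
Proof. rewrite !dot_subl !dot_subr !dot_scalel !dot_scaler (dot_comm e w); ring. Qed.

Lemma proj_vi n (S : vec n -> Prop) u p z :
  convex_setn S -> is_proj S u p -> S z -> dot (vsub u p) (vsub z p) <= 0.
Proof.
move=> CS [Sp Hp] Sz.
have key : forall t, 0 < t <= 1 -> 2 * dot (vsub u p) (vsub z p) <= t * dot (vsub z p) (vsub z p).
  move=> t Ht.
  have Sq := CS z p t Sz Sp ltac:(lra).
  have := sq_le_of_norm_le (Hp _ Sq).
  have -> : vsub u (vadd (vscale t z) (vscale (1 - t) p)) = vsub (vsub u p) (vscale t (vsub z p)).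
    by apply: functional_extensionality => i; rewrite /vsub /vadd /vscale; ring.
  rewrite sq_sub_scale.
  move=> H.
  have : t * (2 * dot (vsub u p) (vsub z p)) <= t * (t * dot (vsub z p) (vsub z p)) by nra.
  move=> H2; apply: (Rmult_le_reg_l t); lra.
apply: Rnot_lt_le => Hc.
set N := dot (vsub z p) (vsub z p).
have HN : 0 <= N by apply: dot_ge0.
set s := dot (vsub u p) (vsub z p) in Hc key.
have Ht : 0 < Rmin 1 (s / (N + 1)) <= 1.
  split; last exact: Rmin_l.
  apply: Rmin_glb_lt; first lra. apply: Rdiv_lt_0_compat; lra.
have H0 := key _ Ht.
have H1 : Rmin 1 (s / (N + 1)) * N <= s / (N + 1) * N.
  apply: Rmult_le_compat_r => //; exact: Rmin_r.
rewrite (_ : s / (N + 1) * N = s * (N / (N + 1))) in H1; last by field; lra.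
have := frac_lt1 HN => H3.
have : s * (N / (N + 1)) < s * 1 by apply: Rmult_lt_compat_l.
rewrite -/N in H0. lra.
Qed.

Section Smooth.
Variable n : nat.
Variable X : vec n -> Prop.
Variable f : vec n -> R.
Variable g : vec n -> vec n.
Variable L : R.
Hypothesis CX : convex_setn X.
Hypothesis Cf : convex_fun_on X f.
Hypothesis Hg : has_gradient_on X f g.
Hypothesis HL : 0 < L.
Hypothesis Lip : lipschitz_on X g L.

Lemma first_order a b : X a -> X b -> f a + dot (g a) (vsub b a) <= f b.
Proof.
move=> Xa Xb.
apply: Rnot_lt_le => Hc.
set s := f a + dot (g a) (vsub b a) - f b.
have Hs : 0 < s by rewrite /s; lra.
set M := vnorm (vsub b a).
have HM : 0 <= M by apply: vnorm_ge0.
set eps := s / (2 * (M + 1)).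
have Heps : 0 < eps by apply: Rdiv_lt_0_compat; lra.
have [d [Hd Hdel]] := Hg Xa Heps.
set t := Rmin 1 (d / (2 * (M + 1))).
have Ht0 : 0 < t by apply: Rmin_glb_lt; [lra | apply: Rdiv_lt_0_compat; lra].
have Ht1 : t <= 1 by apply: Rmin_l.
have Xz := Cf (t:=t) Xb Xa ltac:(lra).
have Xz' := CX (t:=t) Xb Xa ltac:(lra).
set z := vadd (vscale t b) (vscale (1 - t) a) in Xz Xz'.
have Ez : vsub z a = vscale t (vsub b a).
  by apply: functional_extensionality => i; rewrite /z /vsub /vadd /vscale; ring.
have Nz : vnorm (vsub z a) = t * M by rewrite Ez vnorm_scale Rabs_pos_eq /M; lra.
have Hlt : vnorm (vsub z a) < d.
  rewrite Nz.
  have : t * M <= d / (2 * (M + 1)) * M by apply: Rmult_le_compat_r => //; exact: Rmin_r.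
  have -> : d / (2 * (M + 1)) * M = d * (M / (M + 1)) / 2 by field; lra.
  have := frac_lt1 HM => H3.
  have : d * (M / (M + 1)) < d * 1 by apply: Rmult_lt_compat_l.
  lra.
have := Hdel z Xz' Hlt.
rewrite Nz Ez dot_scaler => /Rabs_le_inv [H1 H2].
(* t*(dot) - eps t M <= f z - f a <= t (f b - f a) *)
have H4 : t * s <= eps * (t * M) by rewrite /s; lra.
have H5 : eps * M <= s / 2.
  rewrite /eps.
  have -> : s / (2 * (M + 1)) * M = s * (M / (M + 1)) / 2 by field; lra.
  have := frac_lt1 HM => H3.
  have : s * (M / (M + 1)) <= s * 1 by apply: Rmult_le_compat_l; lra.
  lra.
have : t * (eps * M) <= t * (s / 2) by apply: Rmult_le_compat_l; lra.
have : 0 < t * s by nra.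
nra.
Qed.

Definition Eg a b := f b - f a - dot (g a) (vsub b a).

Lemma half_vec (a b : vec n) :
  vsub (vadd (vscale (/2) a) (vscale (1 - /2) b)) a = vscale (/2) (vsub b a) /\
  vsub b (vadd (vscale (/2) a) (vscale (1 - /2) b)) = vscale (/2) (vsub b a).
Proof.
split; apply: functional_extensionality => i; rewrite /vsub /vadd /vscale; field.
Qed.

Lemma descent_m m : forall a b, X a -> X b ->
  Eg a b <= (L / 2 + L / 2 * (/ 2) ^ m) * dot (vsub b a) (vsub b a).
Proof.
elim: m => [|m IH] a b Xa Xb.
  have H1 := first_order Xb Xa.
  have H2 := Lip Xb Xa.
  have H3 := cauchy_schwarz (vsub (g b) (g a)) (vsub b a).
  have H4 : vnorm (vsub (g b) (g a)) * vnorm (vsub b a) <= L * vnorm (vsub b a) * vnorm (vsub b a).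
    apply: Rmult_le_compat_r => //; exact: vnorm_ge0.
  rewrite Rmult_assoc vnorm_sq in H4.
  have H5 : dot (vsub (g b) (g a)) (vsub b a) = dot (g b) (vsub b a) - dot (g a) (vsub b a).
    by rewrite dot_subl.
  have H6 : dot (g b) (vsub a b) = - dot (g b) (vsub b a) by rewrite !dot_subr; ring.
  rewrite /Eg /= Rmult_1_r.
  have -> : L / 2 + L / 2 = L by field.
  lra.
have [Xc Hc] : X (vadd (vscale (/2) a) (vscale (1 - /2) b)) /\ True.
  split => //; apply: CX => //; lra.
have [Eca Ebc] := half_vec a b.
move: Xc Eca Ebc.
set c := vadd (vscale (/2) a) (vscale (1 - /2) b) => Xc Eca Ebc.
have Eid : Eg a b = Eg a c + Eg c b + dot (vsub (g c) (g a)) (vsub b c).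
  rewrite /Eg !dot_subl !dot_subr; ring.
have I1 := IH a c Xa Xc.
have I2 := IH c b Xc Xb.
have H2 := Lip Xc Xa.
have H3 := cauchy_schwarz (vsub (g c) (g a)) (vsub b c).
have H4 : vnorm (vsub (g c) (g a)) * vnorm (vsub b c) <= L * vnorm (vsub c a) * vnorm (vsub b c).
  apply: Rmult_le_compat_r => //; exact: vnorm_ge0.
rewrite Eca Ebc vnorm_scale Rabs_pos_eq in H4; last lra.
rewrite Eca !dot_scalel !dot_scaler in I1.
rewrite Ebc !dot_scalel !dot_scaler in I2.
have H7 : L * (/ 2 * vnorm (vsub b a)) * (/ 2 * vnorm (vsub b a)) = L / 4 * dot (vsub b a) (vsub b a).
  rewrite -vnorm_sq; field.
rewrite Eid /=.
have HN := dot_ge0 (vsub b a).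
have Hp : 0 <= (/2) ^ m by apply: pow_le; lra.
set N := dot (vsub b a) (vsub b a) in I1 I2 H7 HN *.
set P := (/2) ^ m in I1 I2 Hp *.
have : (L / 2 + L / 2 * P) * (/ 2 * (/ 2 * N)) + (L / 2 + L / 2 * P) * (/ 2 * (/ 2 * N)) + L / 4 * N
  = (L / 2 + L / 2 * (/ 2 * P)) * N by field.
have Nbc : vnorm (vsub b c) = / 2 * vnorm (vsub b a) by rewrite Ebc vnorm_scale Rabs_pos_eq; lra.
rewrite Nbc in H3.
lra.
Qed.

Lemma descent a b : X a -> X b ->
  f b <= f a + dot (g a) (vsub b a) + L / 2 * dot (vsub b a) (vsub b a).
Proof.
move=> Xa Xb.
apply: Rnot_lt_le => Hc.
have HN := dot_ge0 (vsub b a).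
set N := dot (vsub b a) (vsub b a) in Hc HN.
set D := f b - (f a + dot (g a) (vsub b a) + L / 2 * N).
have HD : 0 < D by rewrite /D; lra.
have Hy : 0 < D / (L / 2 * N + 1) by apply: Rdiv_lt_0_compat; nra.
have Hr : Rabs (/2) < 1 by rewrite Rabs_pos_eq; lra.
have [m Hm] := pow_lt_1_zero _ Hr _ Hy.
have := Hm m (Nat.le_refl m).
have Hp : 0 <= (/2) ^ m by apply: pow_le; lra.
rewrite Rabs_pos_eq // => H1.
have H2 := descent_m m Xa Xb.
rewrite /Eg -/N in H2.
have : (L / 2 * N + 1) * (/ 2) ^ m < (L / 2 * N + 1) * (D / (L / 2 * N + 1)).
  apply: Rmult_lt_compat_l => //; nra.
have -> : (L / 2 * N + 1) * (D / (L / 2 * N + 1)) = D by field; nra.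
rewrite /D in HD *. nra.
Qed.

End Smooth.


Lemma vnorm_pow2 n (u : vec n) : vnorm u ^ 2 = dot u u.
Proof. by rewrite /= Rmult_1_r vnorm_sq. Qed.

Lemma sq_add n (u v : vec n) : dot (vadd u v) (vadd u v) = dot u u + 2 * dot u v + dot v v.
Proof. rewrite !dot_addl !dot_addr (dot_comm v u); ring. Qed.

Lemma qg_alg (k M p1 pt gam D : R) :
  0 < k -> 0 <= M -> 0 <= D ->
  let t := (M + 2) / (M + 4) in
  p1 >= pt + (1 - t) * gam ->
  pt - t * gam + k / 2 * (t * t * D) <= 0 ->
  (k / 2 - 2 * k / (M + 4)) * (t * t * D) <= pt ->
  (k / 2 - 2 * k / (M + 1 + 4)) * D <= p1.
Proof.
move=> Hk HM HD t H1 H2 H3.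
have Ht0 : 0 < t by rewrite /t; apply: Rdiv_lt_0_compat; lra.
have Ht1 : 1 - t = 2 / (M + 4) by rewrite /t; field; lra.
have Ht1p : 0 < 1 - t by rewrite Ht1; apply: Rdiv_lt_0_compat; lra.
have A : t * p1 >= t * pt + t * ((1 - t) * gam) by nra.
have B : (1 - t) * (t * gam) >= (1 - t) * (pt + k / 2 * (t * t * D)) by nra.
set W := t * (k / 2 - 2 * k / (M + 4) + (1 - t) * (k / 2)).
have C : t * p1 >= t * (W * D).
  have E : t * (W * D) = (k / 2 - 2 * k / (M + 4)) * (t * t * D) + (1 - t) * (k / 2 * (t * t * D)).
    rewrite /W; ring.
  have E2 : t * pt + t * ((1 - t) * gam) = t * pt + (1 - t) * (t * gam) by ring.
  nra.
have C2 : W * D <= p1.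
  apply: Rnot_lt_le => Hc. have : t * p1 < t * (W * D) by apply: Rmult_lt_compat_l. lra.
have HW : W - (k / 2 - 2 * k / (M + 1 + 4)) = 2 * k / ((M + 4) * (M + 4) * (M + 5)).
  rewrite /W /t; field; lra.
have : 0 <= 2 * k / ((M + 4) * (M + 4) * (M + 5)).
  apply: Rlt_le; apply: Rdiv_lt_0_compat; first lra.
  apply: Rmult_lt_0_compat; [apply: Rmult_lt_0_compat|]; lra.
move=> H0.
have : 0 <= (W - (k / 2 - 2 * k / (M + 1 + 4))) * D by apply: Rmult_le_pos; lra.
nra.
Qed.

Section QG.
Variable n : nat.
Variable X : vec n -> Prop.
Variable f : vec n -> R.
Variable g : vec n -> vec n.
Variables fstar kappa : R.
Hypothesis CX : convex_setn X.
Hypothesis Cf : convex_fun_on X f.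
Hypothesis Hg : has_gradient_on X f g.
Hypothesis fmin : forall z, X z -> fstar <= f z.
Hypothesis Hk : 0 < kappa.
Hypothesis QSC : quasi_strongly_convex X f g fstar kappa.

Lemma optset_convex : convex_setn (optset X f fstar).
Proof.
move=> a b t [Xa fa] [Xb fb] Ht; split; first exact: CX.
have := Cf Xa Xb Ht. have := fmin (CX Xa Xb Ht). rewrite fa fb. nra.
Qed.

Lemma qg_m m : forall x xb, X x -> is_proj (optset X f fstar) x xb ->
  (kappa / 2 - 2 * kappa / (INR m + 4)) * dot (vsub x xb) (vsub x xb) <= f x - fstar.
Proof.
elim: m => [|m IH] x xb Xx Pxb.
  have := fmin Xx. have -> : kappa / 2 - 2 * kappa / (INR 0 + 4) = 0 by rewrite /=; field.
  lra.
have HM := pos_INR m.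
set M := INR m in HM IH *.
set t := (M + 2) / (M + 4).
have Ht0 : 0 < t by rewrite /t; apply: Rdiv_lt_0_compat; lra.
have Ht1 : t <= 1.
  have -> : t = 1 - 2 / (M + 4) by rewrite /t; field; lra.
  have : 0 < 2 / (M + 4) by apply: Rdiv_lt_0_compat; lra.
  lra.
have [[Xxb fxb] Hpr] := Pxb.
have Xt := CX Xx Xxb (conj (Rlt_le _ _ Ht0) Ht1).
move: Xt.
set xt := vadd (vscale t x) (vscale (1 - t) xb) => Xt.
have E1 : vsub xt xb = vscale t (vsub x xb).
  by apply: functional_extensionality => i; rewrite /xt /vsub /vadd /vscale; ring.
have E2 : vsub xb xt = vscale (- t) (vsub x xb).
  by apply: functional_extensionality => i; rewrite /xt /vsub /vadd /vscale; ring.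
have E3 : vsub x xt = vscale (1 - t) (vsub x xb).
  by apply: functional_extensionality => i; rewrite /xt /vsub /vadd /vscale; ring.
have Pt : is_proj (optset X f fstar) xt xb.
  split => // z Oz.
  apply: norm_le_of_sq_le.
  have E4 : vsub xt z = vadd (vscale t (vsub x xb)) (vsub xb z).
    by apply: functional_extensionality => i; rewrite /xt /vsub /vadd /vscale; ring.
  rewrite E1 E4 sq_add !dot_scalel !dot_scaler.
  have VI := proj_vi optset_convex Pxb Oz.
  have Q : dot (vsub x xb) (vsub xb z) = - dot (vsub x xb) (vsub z xb) by rewrite !dot_subr; ring.
  have := dot_ge0 (vsub xb z).
  rewrite Q. nra.
have Hq := QSC Xt Pt.
rewrite E2 vnorm_pow2 E1 dot_scaler !dot_scalel !dot_scaler in Hq.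
have Hf := first_order CX Cf Hg Xt Xx.
rewrite E3 dot_scaler in Hf.
have Hi := IH xt xb Xt Pt.
rewrite E1 !dot_scalel !dot_scaler in Hi.
rewrite S_INR -/M.
apply: (qg_alg (gam := dot (g xt) (vsub x xb)) (pt := f xt - fstar) Hk HM (dot_ge0 _)).
- rewrite -/t; lra.
- rewrite -/t; lra.
- rewrite -/t Rmult_assoc; lra.
Qed.

Lemma qg x xb : X x -> is_proj (optset X f fstar) x xb ->
  kappa / 2 * dot (vsub x xb) (vsub x xb) <= f x - fstar.
Proof.
move=> Xx Pxb.
apply: Rnot_lt_le => Hc.
have HD := dot_ge0 (vsub x xb).
set D := dot (vsub x xb) (vsub x xb) in Hc HD.
set del := kappa / 2 * D - (f x - fstar).
have Hdel : 0 < del by rewrite /del; lra.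
have [m Hm] := INR_unbounded (2 * kappa * D / del).
have H := qg_m m Xx Pxb. rewrite -/D in H.
have HM := pos_INR m.
have : 2 * kappa * D / del * del < INR m * del by apply: Rmult_lt_compat_r.
have -> : 2 * kappa * D / del * del = 2 * kappa * D by field; lra.
move=> H2.
have E : (kappa / 2 - 2 * kappa / (INR m + 4)) * D = kappa / 2 * D - 2 * kappa * D / (INR m + 4) by field; lra.
rewrite E in H.
have : 2 * kappa * D / (INR m + 4) * (INR m + 4) = 2 * kappa * D by field; lra.
move=> H3.
have : 2 * kappa * D / (INR m + 4) >= del by rewrite /del; lra.
move=> H4.
have : del * (INR m + 4) <= 2 * kappa * D / (INR m + 4) * (INR m + 4) by apply: Rmult_le_compat_r; lra.
nra.
Qed.

End QG.


Lemma lyap_id n (x0 x1 y p : vec n) (th L fx0 fx1 fs : R) :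
  th <> 0 -> 1 + th <> 0 ->
  let k := th * th * L in
  let b := (1 - th) / (1 + th) in
  let v0 := vscale (/ th) (vsub (vscale (1 + th) y) x0) in
  let v1 := vscale (/ th) (vsub (vscale (1 + th) (vadd x1 (vscale b (vsub x1 x0)))) x1) in
  (fx1 - fs + k / 2 * dot (vsub v1 p) (vsub v1 p)) - (1 - th) * (fx0 - fs + k / 2 * dot (vsub v0 p) (vsub v0 p)) =
  (1 - th) * (fx1 - (fx0 + L * dot (vsub y x1) (vsub y x0) - L / 2 * dot (vsub y x1) (vsub y x1)))
  + th * (fx1 - (fs - k / 2 * dot (vsub y p) (vsub y p) + L * dot (vsub y x1) (vsub y p) - L / 2 * dot (vsub y x1) (vsub y x1)))
  - k / 2 * th * (1 - th) * dot (vsub v0 y) (vsub v0 y).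
Proof.
move=> H0 H1 k b v0 v1.
rewrite /v0 /v1 /k /b.
rewrite !(dot_subl, dot_subr, dot_addl, dot_addr, dot_scalel, dot_scaler).
rewrite (dot_comm x0 x1) (dot_comm x0 y) (dot_comm x0 p) (dot_comm x1 y) (dot_comm x1 p) (dot_comm y p).
field; split => //.
Qed.

Lemma grad_step n (X : vec n -> Prop) (f : vec n -> R) (g : vec n -> vec n) (L : R) y x1 z :
  convex_setn X -> convex_fun_on X f -> has_gradient_on X f g -> 0 < L -> lipschitz_on X g L ->
  X y -> is_proj X (vsub y (vscale (/ L) (g y))) x1 -> X z ->
  f x1 <= f y + dot (g y) (vsub z y) + L * dot (vsub y x1) (vsub y z) - L / 2 * dot (vsub y x1) (vsub y x1).
Proof.
move=> CX Cf Hg HL Lip Xy Px1 Xz.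
have Xx1 : X x1 by case: Px1.
have D := descent CX Cf Hg HL Lip Xy Xx1.
have VI := proj_vi CX Px1 Xz.
rewrite (_ : vsub (vsub y (vscale (/ L) (g y))) x1 = vsub (vsub y x1) (vscale (/ L) (g y))) in VI;
  last by apply: functional_extensionality => i; rewrite /vsub /vscale; ring.
rewrite dot_subl dot_scalel in VI.
have VIL : L * dot (vsub y x1) (vsub z x1) <= dot (g y) (vsub z x1).
  have := Rmult_le_compat_l L _ _ (Rlt_le _ _ HL) VI.
  have -> : L * (dot (vsub y x1) (vsub z x1) - / L * dot (g y) (vsub z x1)) =
    L * dot (vsub y x1) (vsub z x1) - dot (g y) (vsub z x1) by field; lra.
  lra.
move: D VIL.
rewrite !(dot_subl, dot_subr).
rewrite ?(dot_comm x1 y) ?(dot_comm z y) ?(dot_comm z x1) ?(dot_comm y (g y)) ?(dot_comm x1 (g y)).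
lra.
Qed.

Theorem theorem14 (n : nat) (X : vec n -> Prop) (f : vec n -> R) (g : vec n -> vec n)
    (Lf kappa fstar : R) (x y : nat -> vec n) :
  (* standing setting *)
  (exists z, X z) -> closed_setn X -> convex_setn X ->
  convex_fun_on X f -> has_gradient_on X f g -> continuous_onn X g ->
  0 < Lf -> lipschitz_on X g Lf ->
  (forall z, X z -> fstar <= f z) ->
  (exists z, optset X f fstar z) -> closed_setn (optset X f fstar) ->
  (* quasi-strong convexity *)
  0 < kappa -> quasi_strongly_convex X f g fstar kappa ->
  (* fast gradient method *)
  x 0%nat = y 0%nat -> X (x 0%nat) ->
  (forall k, is_proj X (vsub (y k) (vscale (/ Lf) (g (y k)))) (x (S k))) ->
  (forall k, y (S k) = vadd (x (S k))
      (vscale ((sqrt Lf - sqrt kappa) / (sqrt Lf + sqrt kappa)) (vsub (x (S k)) (x k)))) ->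
  (* all y^k in X, with a common projection onto X^* *)
  (forall k, X (y k)) ->
  (exists p, forall k, is_proj (optset X f fstar) (y k) p) ->
  forall k, f (x k) - fstar <= (1 - sqrt (kappa / Lf)) ^ k * (2 * (f (x 0%nat) - fstar)).
Proof.
move=> _ _ CX Cf Hg _ HL Lip fmin _ _ Hk QSC Ex0 Xx0 Px Hy Xy [p Pp] k.
have Xx : forall k, X (x k) by case => [|j] //; case: (Px j).
have [[Xp fp] _] := Pp 0%nat.
have Hf0 : 0 <= f (x 0%nat) - fstar by have := fmin _ Xx0; lra.
case: (classic (exists j, 0 < dot (vsub (y j) p) (vsub (y j) p))) => [[j Hj]|Hno].
-
  have HkL : kappa <= Lf.
    have Hq := QSC _ _ (Xy j) (Pp j).
    rewrite vnorm_pow2 in Hq.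
    have Hd := descent CX Cf Hg HL Lip (Xy j) Xp.
    rewrite [vsub p (y j)](_ : _ = vscale (-1) (vsub (y j) p)) in Hd;
      last by apply: functional_extensionality => i; rewrite /vsub /vscale; ring.
    rewrite !dot_scalel !dot_scaler in Hd.
    rewrite fp in Hd.
    have : kappa / 2 * dot (vsub (y j) p) (vsub (y j) p) <= Lf / 2 * dot (vsub (y j) p) (vsub (y j) p).
      have Hdot : -1 * dot (g (y j)) (vsub (y j) p) = dot (g (y j)) (vsub p (y j)).
        rewrite !dot_subr; ring.
      move: Hd; rewrite Hdot. lra.
    nra.
  have Hr : 0 < kappa / Lf by apply: Rdiv_lt_0_compat.
  have Hr1 : kappa / Lf <= 1.
    have -> : kappa / Lf = kappa * / Lf by [].
    have -> : 1 = Lf * / Lf by field; lra.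
    apply: Rmult_le_compat_r => //; apply: Rlt_le; apply: Rinv_0_lt_compat; lra.
  set th := sqrt (kappa / Lf).
  have Hth0 : 0 < th by apply: sqrt_lt_R0.
  have Hth1 : th <= 1 by rewrite /th -sqrt_1; apply: sqrt_le_1_alt.
  have Hthsq : th * th = kappa / Lf by apply: sqrt_sqrt; lra.
  have Hk' : kappa = th * th * Lf by rewrite Hthsq; field; lra.
  have HsL : 0 < sqrt Lf by apply: sqrt_lt_R0.
  have Hsk : sqrt kappa = th * sqrt Lf.
    rewrite {1}Hk' sqrt_mult_alt; last by nra.
    by rewrite sqrt_square; lra.
  have Hb : (sqrt Lf - sqrt kappa) / (sqrt Lf + sqrt kappa) = (1 - th) / (1 + th).
    rewrite Hsk; field; split; [lra | nra].
  pose v := fun j => vscale (/ th) (vsub (vscale (1 + th) (y j)) (x j)).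
  pose V := fun j => f (x j) - fstar + th * th * Lf / 2 * dot (vsub (v j) p) (vsub (v j) p).
  have step : forall j, V j.+1 <= (1 - th) * V j.
    move=> i.
    have A := grad_step CX Cf Hg HL Lip (Xy i) (Px i) (Xx i).
    have A2 := first_order CX Cf Hg (Xy i) (Xx i).
    have B := grad_step CX Cf Hg HL Lip (Xy i) (Px i) Xp.
    have B2 := QSC _ _ (Xy i) (Pp i).
    rewrite vnorm_pow2 in B2.
    have I := lyap_id (x i) (x i.+1) (y i) p Lf (f (x i)) (f (x i.+1)) fstar
      (Rgt_not_eq _ _ Hth0) ltac:(lra).
    cbv zeta in I.
    have Hc := dot_ge0 (vsub (vscale (/ th) (vsub (vscale (1 + th) (y i)) (x i))) (y i)).
    have Ha : f (x i.+1) - (f (x i) + Lf * dot (vsub (y i) (x i.+1)) (vsub (y i) (x i)) -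
       Lf / 2 * dot (vsub (y i) (x i.+1)) (vsub (y i) (x i.+1))) <= 0 by lra.
    rewrite -Hk' in I.
    have Hbb : f (x i.+1) - (fstar - kappa / 2 * dot (vsub (y i) p) (vsub (y i) p) +
       Lf * dot (vsub (y i) (x i.+1)) (vsub (y i) p) -
       Lf / 2 * dot (vsub (y i) (x i.+1)) (vsub (y i) (x i.+1))) <= 0 by lra.
    rewrite /V /v Hy Hb -Hk'.
    have H1 : 0 <= 1 - th by lra.
    have := Rmult_le_compat_l _ _ _ H1 Ha.
    have := Rmult_le_compat_l _ _ _ (Rlt_le _ _ Hth0) Hbb.
    have : 0 <= kappa / 2 * th * (1 - th) *
      dot (vsub (vscale (/ th) (vsub (vscale (1 + th) (y i)) (x i))) (y i))
        (vsub (vscale (/ th) (vsub (vscale (1 + th) (y i)) (x i))) (y i)).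
      apply: Rmult_le_pos => //; apply: Rmult_le_pos; last lra.
      apply: Rmult_le_pos; lra.
    lra.
  have Vk : forall i, V i <= (1 - th) ^ i * V 0%nat.
    elim => [|i IH]; first by rewrite /=; lra.
    have := step i. rewrite /=.
    have : (1 - th) * V i <= (1 - th) * ((1 - th) ^ i * V 0%nat) by apply: Rmult_le_compat_l; lra.
    lra.
  have Hv0 : v 0%nat = x 0%nat.
    apply: functional_extensionality => i; rewrite /v /vscale /vsub -Ex0; field; lra.
  have HV0 : V 0%nat <= 2 * (f (x 0%nat) - fstar).
    have Hq := qg CX Cf Hg fmin Hk QSC (Xy 0%nat) (Pp 0%nat).
    rewrite /V Hv0 -Hk' Ex0. rewrite Ex0 in Hf0. lra.
  have Hvk : f (x k) - fstar <= V k.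
    rewrite /V; have := dot_ge0 (vsub (v k) p). nra.
  have Hpow : 0 <= (1 - th) ^ k by apply: pow_le; lra.
  have := Vk k.
  have : (1 - th) ^ k * V 0%nat <= (1 - th) ^ k * (2 * (f (x 0%nat) - fstar)) by apply: Rmult_le_compat_l.
  lra.
-
  have D0 : forall j, dot (vsub (y j) p) (vsub (y j) p) = 0.
    move=> j; have := dot_ge0 (vsub (y j) p); case/Rle_lt_or_eq_dec => // H.
    by exfalso; apply: Hno; exists j.
  have Fy : forall j, f (y j) <= fstar.
    move=> j.
    have Hd := descent CX Cf Hg HL Lip Xp (Xy j).
    rewrite D0 Rmult_0_r Rplus_0_r fp in Hd.
    have Hc := cauchy_schwarz_abs (g p) (vsub (y j) p).
    rewrite /vnorm (D0 j) sqrt_0 Rmult_0_r in Hc.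
    have := Rle_abs (dot (g p) (vsub (y j) p)). lra.
  have Fx : forall j, f (x j) = fstar.
    case => [|j].
      rewrite Ex0; have := Fy 0%nat; have := fmin _ (Xy 0%nat); lra.
    have Hs := grad_step CX Cf Hg HL Lip (Xy j) (Px j) (Xy j).
    rewrite (_ : dot (vsub (y j) (x j.+1)) (vsub (y j) (y j)) = 0) in Hs; last by rewrite !dot_subr; ring.
    rewrite (_ : dot (g (y j)) (vsub (y j) (y j)) = 0) in Hs; last by rewrite !dot_subr; ring.
    have := dot_ge0 (vsub (y j) (x j.+1)).
    have := Fy j; have := fmin _ (Xx j.+1). nra.
  rewrite !Fx. have -> : fstar - fstar = 0 by ring.
  rewrite Rmult_0_r Rmult_0_r; lra.
Qed.
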